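(* Let $T$ be a decomposition tree of a distance-hereditary graph $G$, and let $v$ be an internal node of $T$ labeled $\oplus$ with left child $v_l$ and right child $v_r$, such that property (P) holds at $v_l$ and at $v_r$. Assume $\hat\alpha(v_r)>\hat\beta(v_l)$. Then $\hat{min}(v)=\hat{min}(v_l)+\hat{min}(v_r)+\hat\alpha(v_r)-\hat\beta(v_l)$.
   Context: All graphs are finite, simple, undirected. For a graph $H$ and $S\subseteq V(H)$, $N_H[S]$ is $S$ together with all vertices adjacent to a vertex of $S$, and $H[S]$ is the induced subgraph. Graphs carry a ''twin set'': a single-vertex graph on $x$ has twin set $\{x\}$. For vertex-disjoint graphs $G_l,G_r$ with twin sets $TS(G_l),TS(G_r)$: the true twin operation $G_l\otimes G_r$ has vertex set $V(G_l)\cup V(G_r)$, edge set $E(G_l)\cup E(G_r)\cup\{uw: u\in TS(G_l), w\in TS(G_r)\}$ and twin set $TS(G_l)\cup TS(G_r)$; the false twin operation $G_l\odot G_r$ has vertex set $V(G_l)\cup V(G_r)$, edge set $E(G_l)\cup E(G_r)$, twin set $TS(G_l)\cup TS(G_r)$; the attachment operation $G_l\oplus G_r$ has the same vertex and edge sets as $G_l\otimes G_r$ and twin set $TS(G_l)$. A decomposition tree $T$ of $G$ is a rooted binary tree whose leaves are in bijection with $V(G)$, each internal node having a left and a right child and a label in $\{\otimes,\odot,\oplus\}$; for each node $v$ define $\hat G(v)$ and $\hat{TS}(v)$ recursively: for a leaf $x$, the single-vertex graph on $x$ with twin set $\{x\}$; for an internal node $v$ with label $\circ$ and children $v_l,v_r$,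 $\hat G(v)=\hat G(v_l)\circ\hat G(v_r)$ with the corresponding twin set; one requires $\hat G(\text{root})=G$. Then $\hat G(v)$ is the subgraph of $G$ induced by the set $\hat V(v)$ of leaves below $v$. For a node $u$ and $0\le k\le|\hat{TS}(u)|$, call $S\subseteq\hat V(u)$ $k$-feasible if $\hat V(u)\setminus\hat{TS}(u)\subseteq N_{\hat G(u)}[S]$ and there is $X\subseteq S\cap\hat{TS}(u)$ with $|X|=k$ such that $\hat G(u)[S\setminus X]$ has a perfect matching. $\hat\gamma_k(u)$ is the minimum size of a $k$-feasible set. $\hat{min}(u)=\min\{\hat\gamma_k(u):0\le k\le|\hat{TS}(u)|\}$, and $\hat\alpha(u)$, $\hat\beta(u)$ are the smallest and the largest $k$ with $\hat\gamma_k(u)=\hat{min}(u)$. Property (P) holds at $u$ if for every $0\le k\le|\hat{TS}(u)|$: $\hat\gamma_k(u)=\hat{min}(u)+\hat\alpha(u)-k$ when $k\le\hat\alpha(u)$; $\hat\gamma_k(u)=\hat{min}(u)+k-\hat\beta(u)$ when $k\ge\hat\beta(u)$; $\hat\gamma_k(u)=\hat{min}(u)$ when $\hat\alpha(u)<k<\hat\beta(u)$ and $k-\hat\alpha(u)$ is even; and $\hat\gamma_k(u)=\hat{min}(u)+1$ otherwise. *)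

(* Defs.v *)
From mathcomp Require Import all_boot.
Set Implicit Arguments. Unset Strict Implicit. Unset Printing Implicit Defensive.

(* Node labels: true twin (⊗), false twin (⊙), attachment (⊕). *)
Inductive label := TrueTwin | FalseTwin | Attach.

Section DTree.
Variable V : finType.

Inductive dtree := Leaf of V | Node of label & dtree & dtree.

Fixpoint leaves (t : dtree) : seq V :=
  match t with Leaf x => [:: x] | Node _ l r => leaves l ++ leaves r end.

Definition vset (t : dtree) : {set V} := [set x | x \in leaves t].

Fixpoint ts (t : dtree) : {set V} :=
  match t with
  | Leaf x => [set x]
  | Node TrueTwin l r => ts l :|: ts r
  | Node FalseTwin l r => ts l :|: ts r
  | Node Attach l r => ts l
  end.

Fixpoint edge (t : dtree) : rel V :=
  match t with
  | Leaf _ => fun _ _ => false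
  | Node op l r => fun x y =>
      [|| edge l x y, edge r x y |
          (if op is FalseTwin then false else true) &&
          (((x \in ts l) && (y \in ts r)) || ((y \in ts l) && (x \in ts r)))]
  end.

Definition decomp_tree (G : rel V) (T : dtree) : Prop :=
  uniq (leaves T) /\ (forall x : V, x \in leaves T) /\ (forall x y, G x y = edge T x y).

Fixpoint is_node (v T : dtree) : Prop :=
  v = T \/ match T with Leaf _ => False | Node _ l r => is_node v l \/ is_node v r end.

Definition cnbhd (u : dtree) (S : {set V}) : {set V} :=
  [set x in vset u | (x \in S) || [exists y in S, edge u y x]].

Definition has_perfect_matching (u : dtree) (W : {set V}) : bool :=
  [exists M : {set {set V}},
    [forall e in M, exists x, exists y,
        [&& x != y, e == [set x; y], x \in W, y \in W & edge u x y]]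
    && [forall x in W, #|[set e in M | x \in e]| == 1]].

Definition kfeasible (u : dtree) (k : nat) (S : {set V}) : bool :=
  [&& S \subset vset u,
      (vset u :\: ts u) \subset cnbhd u S &
      [exists X : {set V}, [&& X \subset S :&: ts u, #|X| == k &
                               has_perfect_matching u (S :\: X)]]].

(* \hat\gamma_k(u): minimum size of a k-feasible set.  (A k-feasible set always
   exists for k <= |TS(u)|, so the default value #|V|.+1 is never the result.) *)
Definition gamma (u : dtree) (k : nat) : nat :=
  \big[minn/#|V|.+1]_(S : {set V} | kfeasible u k S) #|S|.

Definition hmin (u : dtree) : nat := \big[minn/#|V|.+1]_(k < #|ts u|.+1) gamma u k.

Definition halpha (u : dtree) : nat :=
  \big[minn/#|ts u|]_(k < #|ts u|.+1 | gamma u k == hmin u) k.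

Definition hbeta (u : dtree) : nat :=
  \max_(k < #|ts u|.+1 | gamma u k == hmin u) k.

Definition propP (u : dtree) : Prop :=
  forall k, k <= #|ts u| ->
    [/\ k <= halpha u -> gamma u k = hmin u + halpha u - k,
        hbeta u <= k -> gamma u k = hmin u + k - hbeta u,
        halpha u < k < hbeta u -> ~~ odd (k - halpha u) -> gamma u k = hmin u &
        halpha u < k < hbeta u -> odd (k - halpha u) -> gamma u k = (hmin u).+1].

End DTree.

(* Main.v *)
Require Import Defs.
From mathcomp Require Import all_boot zify.
Set Implicit Arguments. Unset Strict Implicit. Unset Printing Implicit Defensive.

Lemma bigmin_seq_le (I : eqType) (s : seq I) (P : pred I) (F : I -> nat) x0 i :
  i \in s -> P i -> \big[minn/x0]_(j <- s | P j) F j <= F i.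
Proof.
elim: s => // a s IH; rewrite inE big_cons => /orP[/eqP<-|ins] Pi.
  by rewrite Pi geq_minl.
case: (P a); last exact: IH.
exact: leq_trans (geq_minr _ _) (IH ins Pi).
Qed.

Lemma bigmin_le (I : finType) (P : pred I) (F : I -> nat) x0 i :
  P i -> \big[minn/x0]_(j | P j) F j <= F i.
Proof. by move=> Pi; apply: bigmin_seq_le => //; rewrite mem_index_enum. Qed.

Lemma bigmin_att (I : finType) (P : pred I) (F : I -> nat) x0 :
  \big[minn/x0]_(j | P j) F j = x0 \/ exists2 i, P i & \big[minn/x0]_(j | P j) F j = F i.
Proof.
apply: (big_ind (fun y => y = x0 \/ exists2 i, P i & y = F i)); first by left.
  by move=> a b Ha Hb; rewrite /minn; case: ifP => _.
by move=> i Pi; right; exists i.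
Qed.

Lemma bigmin_idx (I : finType) (P : pred I) (F : I -> nat) x0 :
  \big[minn/x0]_(j | P j) F j <= x0.
Proof.
apply: (big_rec (fun y => y <= x0)) => // i y _ Hy.
exact: leq_trans (geq_minr _ _) Hy.
Qed.

Section S.
Variable V : finType.
Implicit Types (u l r : dtree V) (S W X Sl Sr Xl Xr Yl Yr Y : {set V}).

Lemma vsetE u x : (x \in vset u) = (x \in leaves u).
Proof. by rewrite inE. Qed.

Lemma ts_leaves u x : x \in ts u -> x \in leaves u.
Proof.
elim: u => [y|op l IHl r IHr] /=; first by rewrite inE => /eqP->; rewrite inE.
rewrite mem_cat; case: op => /=; try by rewrite inE => /orP[/IHl->|/IHr->]; rewrite ?orbT.
by move/IHl->.
Qed.

Lemma edge_sym u x y : edge u x y = edge u y x.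
Proof. elim: u => [//|op l IHl r IHr] /=. by rewrite IHl IHr (orbC (_ && _)). Qed.

Lemma edge_leaves u x y : edge u x y -> (x \in leaves u) && (y \in leaves u).
Proof.
elim: u => [//|op l IHl r IHr] /=; rewrite !mem_cat.
case/or3P=> [/IHl/andP[->->]//|/IHr/andP[->->]|/andP[_ /orP[]/andP[/ts_leaves-> /ts_leaves->]]];
  by rewrite ?orbT.
Qed.

Lemma ts_ne u : 0 < #|ts u|.
Proof.
elim: u => [x|op l IHl r IHr] /=; first by rewrite cards1.
case: op => //; apply: leq_trans IHl _; apply: subset_leq_card; exact: subsetUl.
Qed.

Lemma uniq_node (v T : dtree V) : is_node v T -> uniq (leaves T) -> uniq (leaves v).
Proof.
elim: T => [x|op l IHl r IHr] /=; first by case=> [->//|[]].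
case=> [->//|[/IHl H|/IHr H]]; rewrite cat_uniq => /and3P[ul _ ur]; auto.
Qed.

Lemma disj_lr op l r x : uniq (leaves (Node op l r)) -> x \in leaves l -> x \in leaves r -> False.
Proof.
rewrite /= cat_uniq => /and3P[_ /hasPn H _] xl xr.
by move: (H x xr); rewrite /= xl.
Qed.


Definition pmp u W := exists p : V -> V, forall x, x \in W ->
  [/\ p x \in W, p x != x, p (p x) = x & edge u x (p x)].

Lemma set2_eq (x y a b : V) : [set x; y] = [set a; b] -> x != y ->
  (x = a /\ y = b) \/ (x = b /\ y = a).
Proof.
move=> E nxy.
have xab : x \in [set a; b] by rewrite -E set21.
have yab : y \in [set a; b] by rewrite -E set22.
have ax : a \in [set x; y] by rewrite E set21.
have bx : b \in [set x; y] by rewrite E set22.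
move: xab yab ax bx; rewrite !in_set2.
case/orP=> /eqP xE; case/orP=> /eqP yE; subst.
- by rewrite eqxx in nxy.
- by left.
- by right.
- by rewrite eqxx in nxy.
Qed.

Lemma pmpP u W : has_perfect_matching u W <-> pmp u W.
Proof.
split.
  case/existsP=> M /andP[/forallP HM /forallP HW].
  pose p x := if [pick y | (y != x) && ([set x; y] \in M)] is Some y then y else x.
  have ex x : x \in W -> exists y, (y != x) && ([set x; y] \in M).
    move=> xW; move: (HW x); rewrite xW /= => /cards1P[e He].
    have : e \in [set e0 in M | x \in e0] by rewrite He set11.
    rewrite inE => /andP[eM xe].
    move: (HM e); rewrite eM /= => /existsP[a /existsP[b /and5P[nab /eqP Ee aW bW eab]]].
    move: xe; rewrite Ee in_set2 => /orP[]/eqP xE.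
      by exists b; rewrite xE -Ee eq_sym nab eM.
    by exists a; rewrite xE setUC -Ee nab eM.
  have pP x : x \in W -> (p x != x) && ([set x; p x] \in M).
    move=> /ex[y Hy]; rewrite /p; case: pickP => // /(_ y); by rewrite Hy.
  have pW x : x \in W -> (p x \in W) && edge u x (p x).
    move=> xW; case/andP: (pP x xW) => nx M1.
    move: (HM [set x; p x]); rewrite M1 /= => /existsP[a /existsP[b /and5P[nab /eqP Ee aW bW eab]]].
    rewrite eq_sym in nx.
    case: (set2_eq Ee nx) => [[-> ->]|[-> ->]]; rewrite ?aW ?bW //.
    by rewrite edge_sym.
  exists p => x xW.
  case/andP: (pW x xW) => pxW exy; case/andP: (pP x xW) => nx M1.
  split => //.
  case/andP: (pP _ pxW) => nz M2.
  move: (HW (p x)); rewrite pxW /= => /cards1P[e He].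
  have e1 : [set x; p x] \in [set e0 in M | p x \in e0] by rewrite inE M1 set22.
  have e2 : [set p x; p (p x)] \in [set e0 in M | p x \in e0] by rewrite inE M2 set21.
  move: e1 e2; rewrite He !inE => /eqP E1 /eqP E2.
  have : [set x; p x] = [set p x; p (p x)] by rewrite E1 E2.
  rewrite eq_sym in nx.
  case/set2_eq => // [[E3 _]|[E3 _]]; first by rewrite -E3 eqxx in nx.
  by rewrite -E3.
case=> p Hp; apply/existsP; exists [set [set x; p x] | x in W]; apply/andP; split.
  apply/forallP=> e; apply/implyP=> /imsetP[x xW ->].
  case: (Hp x xW) => pxW nx _ exy.
  apply/existsP; exists x; apply/existsP; exists (p x).
  by rewrite eq_sym nx eqxx xW pxW exy.
apply/forallP=> z; apply/implyP=> zW.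
apply/cards1P; exists [set z; p z]; apply/setP=> e; rewrite !inE.
apply/andP/eqP.
  case=> /imsetP[x xW ->]; rewrite in_set2 => /orP[]/eqP->//.
  case: (Hp x xW) => _ _ ppx _; rewrite ppx; exact: setUC.
move=> ->; split; last exact: set21. by apply/imsetP; exists z.
Qed.

Lemma pmp0 u : pmp u set0.
Proof. by exists id => x; rewrite inE. Qed.

Lemma pmp2 u a b : a != b -> edge u a b -> pmp u [set a; b].
Proof.
move=> nab eab; exists (fun z => if z == a then b else a) => z.
have nba : (b == a) = false by rewrite eq_sym (negbTE nab).
rewrite in_set2 => /orP[]/eqP->; rewrite ?eqxx ?nba.
  by rewrite set22.
by rewrite set21 eqxx edge_sym.
Qed.

Lemma pmpU u W1 W2 : (forall x, x \in W1 -> x \in W2 -> False) ->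
  pmp u W1 -> pmp u W2 -> pmp u (W1 :|: W2).
Proof.
move=> D [p1 H1] [p2 H2].
exists (fun z => if z \in W1 then p1 z else p2 z) => z; rewrite inE.
case: (boolP (z \in W1)) => zW1 /=.
  by case: (H1 z zW1) => pW n pp e; rewrite pW pp inE pW.
move=> zW2; case: (H2 z zW2) => pW n pp e.
have -> : (p2 z \in W1) = false by apply/negP => /D/(_ pW).
by rewrite pp inE pW orbT.
Qed.

Lemma pmp_mono u u' W : (forall x y, edge u x y -> edge u' x y) -> pmp u W -> pmp u' W.
Proof. by move=> E [p H]; exists p => x /H[a b c d]; split => //; apply: E. Qed.


Lemma pmp_cross u (A B : {set V}) n : (forall a b, a \in A -> b \in B -> edge u a b) ->
  (forall x, x \in A -> x \in B -> False) ->
  forall X Y : {set V}, #|X| = n -> #|Y| = n -> X \subset A -> Y \subset B -> pmp u (X :|: Y).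
Proof.
move=> E D; elim: n => [|n IH] X Y cX cY sX sY.
  by rewrite (cards0_eq cX) (cards0_eq cY) setU0; apply: pmp0.
have [x xX] : exists x, x \in X by apply/set0Pn; rewrite -card_gt0 cX.
have [y yY] : exists y, y \in Y by apply/set0Pn; rewrite -card_gt0 cY.
have xA : x \in A := subsetP sX x xX.
have yB : y \in B := subsetP sY y yY.
have -> : X :|: Y = [set x; y] :|: ((X :\ x) :|: (Y :\ y)).
  apply/setP=> z; rewrite !inE.
  have [->|nzx] := eqVneq z x; first by rewrite xX.
  have [->|nzy] := eqVneq z y; first by rewrite yY !orbT.
  by [].
apply: pmpU.
- move=> z; rewrite in_set2 !inE => /orP[]/eqP->; rewrite eqxx /= ?orbF => /andP[_ H].
  + by apply: (D x xA); apply: subsetP sY _ H.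
  + by apply: (D y) yB; apply: subsetP sX _ H.
- apply: pmp2; last exact: E.
  by apply/negP=> /eqP xy; apply: (D x xA); rewrite xy.
- apply: IH.
  + by move: cX; rewrite (cardsD1 x) xX => -[].
  + by move: cY; rewrite (cardsD1 y) yY => -[].
  + exact: subset_trans (subD1set X x) sX.
  + exact: subset_trans (subD1set Y y) sY.
Qed.

Lemma kfeasP u k S : kfeasible u k S <->
  [/\ S \subset vset u, vset u :\: ts u \subset cnbhd u S &
      exists X, [/\ X \subset S :&: ts u, #|X| = k & pmp u (S :\: X)]].
Proof.
rewrite /kfeasible; split.
  case/and3P=> h1 h2 /existsP[X /and3P[h3 /eqP h4 /pmpP h5]]; split => //.
  by exists X.
case=> h1 h2 [X [h3 h4 h5]]; rewrite h1 h2 /=; apply/existsP; exists X.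
by rewrite h3 h4 eqxx; apply/pmpP.
Qed.

Lemma gamma_le u k S : kfeasible u k S -> gamma u k <= #|S|.
Proof. exact: bigmin_le. Qed.

Lemma gamma_att u k : gamma u k <= #|V| -> exists2 S, kfeasible u k S & #|S| = gamma u k.
Proof.
rewrite /gamma; case: (bigmin_att (fun S => kfeasible u k S) (fun S : {set V} => #|S|) #|V|.+1) => [->|[S HS ->]]; first by rewrite ltnn.
by exists S.
Qed.

Lemma gamma_max u k : gamma u k <= #|V|.+1.
Proof. exact: bigmin_idx. Qed.

Lemma hmin_le u k : k <= #|ts u| -> hmin u <= gamma u k.
Proof.
move=> hk; rewrite /hmin.
exact: (bigmin_le (fun j : 'I_#|ts u|.+1 => gamma u j) _ (i := Ordinal (hk : k < #|ts u|.+1))).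
Qed.

Lemma hmin_att u : exists2 k, k <= #|ts u| & hmin u = gamma u k.
Proof.
have H0 := hmin_le (leq0n #|ts u|); move: H0; rewrite /hmin.
case: (bigmin_att xpredT (fun j : 'I_#|ts u|.+1 => gamma u j) #|V|.+1) => [E|[i _ ->]]; last by move=> _; exists i; rewrite // -ltnS.
move=> H0; exists 0 => //; rewrite E; apply/eqP; rewrite eqn_leq gamma_max andbT -E.
exact: H0.
Qed.

Lemma halpha_le u : halpha u <= #|ts u|.
Proof.
rewrite /halpha; apply: (big_ind (fun y => y <= #|ts u|)) => //.
  by move=> a b Ha Hb; rewrite /minn; case: ifP.
by move=> i _; rewrite -ltnS.
Qed.

Lemma hbeta_le u : hbeta u <= #|ts u|.
Proof.
rewrite /hbeta; apply: (big_ind (fun y => y <= #|ts u|)) => //.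
  by move=> a b Ha Hb; rewrite geq_max Ha.
by move=> i _; rewrite -ltnS.
Qed.


Lemma vsetN op l r x : (x \in vset (Node op l r)) = (x \in vset l) || (x \in vset r).
Proof. by rewrite !vsetE /= mem_cat. Qed.

Lemma edgeL op l r x y : edge l x y -> edge (Node op l r) x y.
Proof. by move=> e /=; rewrite e. Qed.

Lemma edgeR op l r x y : edge r x y -> edge (Node op l r) x y.
Proof. by move=> e /=; rewrite e orbT. Qed.

Lemma cnbhdL op l r Sl Sr x : x \in cnbhd l Sl -> x \in cnbhd (Node op l r) (Sl :|: Sr).
Proof.
rewrite !inE /= mem_cat => /andP[-> /orP[->//|/existsP[y /andP[yS e]]]] /=.
by apply/orP; right; apply/existsP; exists y; rewrite inE yS /= e.
Qed.

Lemma cnbhdR op l r Sl Sr x : x \in cnbhd r Sr -> x \in cnbhd (Node op l r) (Sl :|: Sr).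
Proof.
rewrite !inE /= mem_cat => /andP[-> /orP[->|/existsP[y /andP[yS e]]]]; rewrite ?orbT //=.
by apply/orP; right; apply/existsP; exists y; rewrite inE yS orbT /= e orbT.
Qed.

Lemma combine op l r Sl Xl Yl Sr Xr Yr :
  uniq (leaves (Node op l r)) ->
  Sl \subset vset l -> Xl \subset Sl -> Yl \subset Xl -> pmp l (Sl :\: Xl) ->
  Sr \subset vset r -> Xr \subset Sr -> Yr \subset Xr -> pmp r (Sr :\: Xr) ->
  pmp (Node op l r) (Yl :|: Yr) ->
  pmp (Node op l r) ((Sl :|: Sr) :\: ((Xl :\: Yl) :|: (Xr :\: Yr))).
Proof.
move=> U sSl sXl sYl pl sSr sXr sYr pr pY.
have D z : z \in vset l -> z \in vset r -> False by rewrite !vsetE; apply: disj_lr U.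
have -> : (Sl :|: Sr) :\: ((Xl :\: Yl) :|: (Xr :\: Yr)) =
          ((Sl :\: Xl) :|: (Sr :\: Xr)) :|: (Yl :|: Yr).
  apply/setP=> z; rewrite !inE.
  have i1 : (z \in Yl) ==> (z \in Xl) by apply/implyP/(subsetP sYl).
  have i2 : (z \in Xl) ==> (z \in Sl) by apply/implyP/(subsetP sXl).
  have i3 : (z \in Yr) ==> (z \in Xr) by apply/implyP/(subsetP sYr).
  have i4 : (z \in Xr) ==> (z \in Sr) by apply/implyP/(subsetP sXr).
  have i5 : (z \in Sl) ==> ~~ (z \in Sr).
    apply/implyP=> /(subsetP sSl) zl; apply/negP=> /(subsetP sSr); exact: D.
  move: i1 i2 i3 i4 i5.
  by case: (z \in Yl); case: (z \in Xl); case: (z \in Sl);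
     case: (z \in Yr); case: (z \in Xr); case: (z \in Sr).
have sub1 z : z \in Sl :\: Xl -> z \in vset l by rewrite inE => /andP[_ /(subsetP sSl)].
have sub2 z : z \in Sr :\: Xr -> z \in vset r by rewrite inE => /andP[_ /(subsetP sSr)].
apply: pmpU => //.
  move=> z; rewrite inE => /orP[] zS; rewrite inE => /orP[] zY.
  - by move: zS; rewrite inE (subsetP sYl _ zY).
  - exact: D (sub1 _ zS) (subsetP sSr _ (subsetP sXr _ (subsetP sYr _ zY))).
  - exact: D (subsetP sSl _ (subsetP sXl _ (subsetP sYl _ zY))) (sub2 _ zS).
  - by move: zS; rewrite inE (subsetP sYr _ zY).
apply: pmpU.
- by move=> z /sub1 zl /sub2; apply: D.
- by apply: pmp_mono pl => x y; apply: edgeL.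
- by apply: pmp_mono pr => x y; apply: edgeR.
Qed.


Lemma twin_feas op l r kl kr Sl Sr : op <> Attach -> uniq (leaves (Node op l r)) ->
  kfeasible l kl Sl -> kfeasible r kr Sr -> kfeasible (Node op l r) (kl + kr) (Sl :|: Sr).
Proof.
move=> nA U /kfeasP[sSl dl [Xl [sXl cXl pl]]] /kfeasP[sSr dr [Xr [sXr cXr pr]]].
have D z : z \in vset l -> z \in vset r -> False by rewrite !vsetE; apply: disj_lr U.
have tsv : ts (Node op l r) = ts l :|: ts r by move: nA; case: (op) => // nA; case: nA.
have sXl' : Xl \subset Sl := subset_trans sXl (subsetIl _ _).
have sXr' : Xr \subset Sr := subset_trans sXr (subsetIl _ _).
apply/kfeasP; split.
- apply/subsetP=> z; rewrite inE vsetN => /orP[/(subsetP sSl)->|/(subsetP sSr)->] //.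
  by rewrite orbT.
- apply/subsetP=> z; rewrite inE tsv inE negb_or vsetN => /andP[/andP[nl nr] /orP[zl|zr]].
    by apply: cnbhdL; apply: (subsetP dl); rewrite inE nl zl.
  by apply: cnbhdR; apply: (subsetP dr); rewrite inE nr zr.
exists (Xl :|: Xr); split.
- apply/subsetP=> z; rewrite tsv !inE => /orP[/(subsetP sXl)|/(subsetP sXr)];
    rewrite !inE => /andP[-> ->]; by rewrite ?orbT.
- rewrite cardsU cXl cXr; suff -> : Xl :&: Xr = set0 by rewrite cards0 subn0.
  apply/setP=> z; rewrite !inE; apply/negP => /andP[/(subsetP sXl') a /(subsetP sXr') b].
  exact: D z (subsetP sSl _ a) (subsetP sSr _ b).
have := combine U sSl sXl' (sub0set Xl) pl sSr sXr' (sub0set Xr) pr.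
by rewrite !setD0 setU0; apply; apply: pmp0.
Qed.

Lemma attach_feas l r Sl Xl Sr Xr Y :
  uniq (leaves (Node Attach l r)) ->
  Sl \subset vset l -> Xl \subset Sl :&: ts l -> pmp l (Sl :\: Xl) ->
  Sr \subset vset r -> vset l :\: ts l \subset cnbhd l Sl ->
  Xr \subset Sr :&: ts r -> pmp r (Sr :\: Xr) -> vset r :\: ts r \subset cnbhd r Sr ->
  0 < #|Xl| -> Y \subset Xl -> #|Y| = #|Xr| ->
  kfeasible (Node Attach l r) (#|Xl| - #|Xr|) (Sl :|: Sr).
Proof.
move=> U sSl sXl pl sSr dl sXr pr dr Xl0 sY cY.
have D z : z \in vset l -> z \in vset r -> False by rewrite !vsetE; apply: disj_lr U.
have sXl' : Xl \subset Sl := subset_trans sXl (subsetIl _ _).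
have sXr' : Xr \subset Sr := subset_trans sXr (subsetIl _ _).
have [a aX] : exists a, a \in Xl by apply/set0Pn; rewrite -card_gt0.
have aS : a \in Sl := subsetP sXl' _ aX.
have aT : a \in ts l by move: (subsetP sXl _ aX); rewrite inE => /andP[].
have cross x y : x \in ts l -> y \in ts r -> edge (Node Attach l r) x y.
  by move=> xl yr /=; rewrite xl yr /= !orbT.
apply/kfeasP; split.
- apply/subsetP=> z; rewrite inE vsetN => /orP[/(subsetP sSl)->|/(subsetP sSr)->] //.
  by rewrite orbT.
- apply/subsetP=> z; rewrite inE vsetN /= => /andP[nl /orP[zl|zr]].
    by apply: cnbhdL; apply: (subsetP dl); rewrite inE nl zl.
  case: (boolP (z \in ts r)) => zt.
    rewrite inE vsetN zr orbT /=; apply/orP; right; apply/existsP; exists a.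
    by rewrite inE aS /= aT zt /= !orbT.
  by apply: cnbhdR; apply: (subsetP dr); rewrite inE zt zr.
exists (Xl :\: Y); split.
- apply/subsetP=> z; rewrite inE => /andP[_ /(subsetP sXl)]; rewrite !inE /= => /andP[-> ->].
  by [].
- by rewrite cardsD (setIidPr sY) cY.
have := combine U sSl sXl' sY pl sSr sXr' (subxx Xr) pr.
rewrite setDv setU0; apply.
apply: (pmp_cross (A := ts l) (B := ts r)) => //.
- by move=> z /ts_leaves zl /ts_leaves zr; apply: disj_lr U zl zr.
- by apply: subset_trans sY _; apply: subset_trans sXl (subsetIr _ _).
- exact: subset_trans sXr (subsetIr _ _).
Qed.


Lemma feas_ex u : uniq (leaves u) -> forall k, k <= #|ts u| -> exists S, kfeasible u k S.
Proof.
elim: u => [x|op l IHl r IHr] U k.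
  rewrite /= cards1 => hk.
  have E : vset (Leaf x) :\: ts (Leaf x) \subset cnbhd (Leaf x) set0.
    apply/subsetP=> z; rewrite !inE /= => /andP[a b].
    by rewrite (eqP b) eqxx in a.
  have sX : [set x] \subset vset (Leaf x) by apply/subsetP=> z; rewrite !inE.
  case: k hk => [|[|//]] _.
    exists set0; apply/kfeasP; split => //; first exact: sub0set.
    by exists set0; rewrite cards0 setDv; split => //; [exact: sub0set|exact: pmp0].
  exists [set x]; apply/kfeasP; split => //.
    by apply/subsetP=> z; rewrite !inE /=; case: eqP.
  exists [set x]; split; [by rewrite /= setIid|exact: cards1|by rewrite setDv; exact: pmp0].
move: (U); rewrite /= cat_uniq => /and3P[Ul _ Ur].
case: op U => U /=.
- move=> hk.
  have hk' : k <= #|ts l| + #|ts r| by apply: leq_trans hk _; rewrite cardsU leq_subr.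
  have [Sl Hl] := IHl Ul (minn k #|ts l|) (geq_minr _ _).
  have [Sr Hr] := IHr Ur (k - minn k #|ts l|) ltac:(lia).
  have := twin_feas (op := TrueTwin) (fun e => ltac:(discriminate)) U Hl Hr.
  by rewrite subnKC ?geq_minl // => H; exists (Sl :|: Sr).
- move=> hk.
  have hk' : k <= #|ts l| + #|ts r| by apply: leq_trans hk _; rewrite cardsU leq_subr.
  have [Sl Hl] := IHl Ul (minn k #|ts l|) (geq_minr _ _).
  have [Sr Hr] := IHr Ur (k - minn k #|ts l|) ltac:(lia).
  have := twin_feas (op := FalseTwin) (fun e => ltac:(discriminate)) U Hl Hr.
  by rewrite subnKC ?geq_minl // => H; exists (Sl :|: Sr).
move=> hk.
have l1 := ts_ne l; have r1 := ts_ne r.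
case: k hk => [|k] hk.
  have [Sl /kfeasP[sSl dl [Xl [sXl cXl pl]]]] := IHl Ul 1 l1.
  have [Sr /kfeasP[sSr dr [Xr [sXr cXr pr]]]] := IHr Ur 1 r1.
  have := attach_feas U sSl sXl pl sSr dl sXr pr dr _ (subxx Xl) _.
  rewrite cXl cXr subnn; move=> H; exists (Sl :|: Sr); exact: H.
have [Sl /kfeasP[sSl dl [Xl [sXl cXl pl]]]] := IHl Ul k.+1 hk.
have [Sr /kfeasP[sSr dr [Xr [sXr cXr pr]]]] := IHr Ur 0 (leq0n _).
have := attach_feas U sSl sXl pl sSr dl sXr pr dr _ (sub0set Xl) _.
rewrite cXl cXr subn0 cards0; move=> H; exists (Sl :|: Sr); exact: H.
Qed.


Lemma edge_vset u x y : edge u x y -> (x \in vset u) && (y \in vset u).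
Proof. by rewrite !vsetE; apply: edge_leaves. Qed.

Lemma ts_sub u x : x \in ts u -> x \in vset u.
Proof. by rewrite vsetE; apply: ts_leaves. Qed.

Lemma edgeA l r x y : edge (Node Attach l r) x y ->
  [\/ edge l x y, edge r x y, (x \in ts l) && (y \in ts r) | (y \in ts l) && (x \in ts r)].
Proof.
rewrite /=; case/or3P=> [H|H|/orP[H|H]]; by [apply: Or41|apply: Or42|apply: Or43|apply: Or44].
Qed.

Local Opaque vset.
Lemma lower l r k S : uniq (leaves (Node Attach l r)) -> kfeasible (Node Attach l r) k S ->
  exists m c, [/\ m <= #|ts l|, c <= #|ts r|, c <= m & gamma l m + gamma r c <= #|S|].
Proof.
move=> U /kfeasP[sS dS [X [sX cX [p Hp]]]].
have D z : z \in vset l -> z \in vset r -> False by rewrite !vsetE; apply: disj_lr U.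
set W := S :\: X.
have SLR z : z \in S -> (z \in vset l) || (z \in vset r).
  by move/(subsetP sS); rewrite vsetN.
have XL z : z \in X -> (z \in S) && (z \in ts l).
  by move/(subsetP sX); rewrite inE -?vsetE.
have eL a b : edge l a b -> (a \in vset l) && (b \in vset l) by apply: edge_vset.
have eR a b : edge r a b -> (a \in vset r) && (b \in vset r) by apply: edge_vset.
have tL a : a \in ts l -> a \in vset l by apply: ts_sub.
have tR a : a \in ts r -> a \in vset r by apply: ts_sub.
have WS z : z \in W -> z \in S by rewrite inE -?vsetE => /andP[].
set Cl := [set x in W | (x \in vset l) && (p x \in vset r)].
set Cr := [set y in W | (y \in vset r) && (p y \in vset l)].
set Sl := S :&: vset l.
set Sr := S :&: vset r.
have cS : #|S| = #|Sl| + #|Sr|.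
  rewrite -(cardsID (vset l) S); congr (_ + _); apply: eq_card => z; rewrite in_setD in_setI.
  case: (boolP (z \in S)) => zS; rewrite ?andbF //= andbT.
  case/orP: (SLR z zS) => [zl|zr]; first by rewrite zl /=; apply/esym/negP=> /(D z zl).
  by rewrite zr; apply/negP=> /D/(_ zr).
have ClT : Cl \subset ts l.
  apply/subsetP=> x; rewrite inE -?vsetE => /and3P[xW xl pr].
  case: (Hp x xW) => _ _ _ /edgeA[/eL/andP[_ pl]|/eR/andP[xr _]|/andP[//]|/andP[/tL pl _]].
  - by case: (D _ pl pr).
  - by case: (D _ xl xr).
  - by case: (D _ pl pr).
have CrT : Cr \subset ts r.
  apply/subsetP=> y; rewrite inE -?vsetE => /and3P[yW yr pl].
  case: (Hp y yW) => _ _ _ /edgeA[/eL/andP[yl _]|/eR/andP[_ pr]|/andP[/tL yl _]|/andP[_ //]].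
  - by case: (D _ yl yr).
  - by case: (D _ pl pr).
  - by case: (D _ yl yr).
have cC : #|Cr| <= #|Cl|.
  rewrite -(card_in_imset (f := p) (D := Cr)); last first.
    move=> y1 y2; rewrite inE -?vsetE => /andP[y1W _]; rewrite inE -?vsetE => /andP[y2W _] E.
    by case: (Hp y1 y1W) => _ _ <- _; case: (Hp y2 y2W) => _ _ <- _; rewrite E.
  apply: subset_leq_card; apply/subsetP=> x /imsetP[y]; rewrite inE -?vsetE => /and3P[yW yr pl] ->.
  case: (Hp y yW) => pW _ pp _; by rewrite inE -?vsetE pW pl pp yr.
exists (k + #|Cl|), #|Cr|; split.
- have -> : k + #|Cl| = #|X :|: Cl|.
    rewrite cardsU cX; suff -> : X :&: Cl = set0 by rewrite cards0 subn0.
    apply/setP=> z; rewrite !inE -?vsetE; apply/negP=> /and3P[zX /andP[zn _] _].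
    by rewrite zX in zn.
  apply: subset_leq_card; apply/subsetP=> z; rewrite inE -?vsetE => /orP[/XL/andP[_ //]|].
  exact: (subsetP ClT).
- exact: subset_leq_card CrT.
- exact: leq_trans cC (leq_addl _ _).
rewrite cS; apply: leq_add; apply: gamma_le; apply/kfeasP; split.
- exact: subsetIr.
- apply/subsetP=> z; rewrite inE -?vsetE => /andP[zt zl].
  have : z \in vset (Node Attach l r) :\: ts (Node Attach l r) by rewrite inE -?vsetE vsetN zl zt.
  move/(subsetP dS); rewrite inE -?vsetE => /andP[_ /orP[zS|/existsP[y /andP[yS e]]]].
    by rewrite inE -?vsetE /cnbhd !inE -?vsetE zS zl.
  case/edgeA: e => [e|/eR/andP[_ zr]|/andP[_ /tR zr]|/andP[zt' _]].
  + move: (e) => /eL/andP[yl _]; rewrite inE -?vsetE zl /=; apply/orP; right.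
    by apply/existsP; exists y; rewrite inE -?vsetE yS yl e.
  + by case: (D _ zl zr).
  + by case: (D _ zl zr).
  + by rewrite zt' in zt.
- exists (X :|: Cl); split.
  + apply/subsetP=> z; rewrite inE -?vsetE => /orP[/XL/andP[zS zt]|zC].
      by rewrite !inE -?vsetE zS zt (tL _ zt).
    have zt := subsetP ClT _ zC.
    by move: zC; rewrite !inE -?vsetE zt => /and3P[/andP[_ ->] -> _].
  + rewrite cardsU cX; suff -> : X :&: Cl = set0 by rewrite cards0 subn0.
    apply/setP=> z; rewrite !inE -?vsetE; apply/negP=> /and3P[zX /andP[zn _] _].
    by rewrite zX in zn.
  + exists p => z; rewrite !inE -?vsetE negb_or => /andP[/andP[zX zC] /andP[zS zl]].
    have zW : z \in W by rewrite inE -?vsetE zX zS.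
    case: (Hp z zW) => pW nz pp e.
    have pnr : p z \notin vset r by move: zC; rewrite zX zS zl.
    have pS := WS _ pW.
    have pl : p z \in vset l by move: (SLR _ pS); rewrite (negbTE pnr) orbF.
    have pX : p z \notin X by move: pW; rewrite inE -?vsetE => /andP[].
    split => //.
    * rewrite ?pX pS pl /= ?andbT (negbTE pX) pp /=.
      by apply/negP=> /(D z zl).
    * case/edgeA: e => [//|/eR/andP[zr _]|/andP[_ /tR pr]|/andP[_ /tR zr]].
      - by case: (D _ zl zr).
      - by rewrite pr in pnr.
      - by case: (D _ zl zr).
- exact: subsetIr.
- apply/subsetP=> z; rewrite inE -?vsetE => /andP[zt zr].
  have ztl : z \notin ts l by apply/negP=> /tL zl; case: (D _ zl zr).
  have : z \in vset (Node Attach l r) :\: ts (Node Attach l r) by rewrite inE -?vsetE vsetN zr orbT ztl.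
  move/(subsetP dS); rewrite inE -?vsetE => /andP[_ /orP[zS|/existsP[y /andP[yS e]]]].
    by rewrite inE -?vsetE /cnbhd !inE -?vsetE zS zr.
  case/edgeA: e => [/eL/andP[_ zl]|e|/andP[_ zt']|/andP[zt' _]].
  + by case: (D _ zl zr).
  + move: (e) => /eR/andP[yr _]; rewrite inE -?vsetE zr /=; apply/orP; right.
    by apply/existsP; exists y; rewrite inE -?vsetE yS yr e.
  + by rewrite zt' in zt.
  + by rewrite zt' in ztl.
- exists Cr; split => //.
  + apply/subsetP=> z zC; have zt := subsetP CrT _ zC.
    by move: zC; rewrite !inE -?vsetE zt => /and3P[/andP[_ ->] -> _].
  + exists p => z; rewrite !inE -?vsetE => /andP[zC /andP[zS zr]].
    have zX : z \notin X by apply/negP=> /XL/andP[_ /tL zl]; case: (D _ zl zr).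
    have zW : z \in W by rewrite inE -?vsetE zX zS.
    case: (Hp z zW) => pW nz pp e.
    have pnl : p z \notin vset l by move: zC; rewrite zX zS zr.
    have pS := WS _ pW.
    have pr : p z \in vset r by move: (SLR _ pS); rewrite (negbTE pnl).
    split => //.
    * rewrite pS pr /= pp !andbT.
      by apply/negP=> /andP[_ /D /(_ zr)].
    * case/edgeA: e => [/eL/andP[zl _]|//|/andP[/tL zl _]|/andP[/tL pl _]].
      - by case: (D _ zl zr).
      - by case: (D _ zl zr).
      - by rewrite pl in pnl.
Qed.


End S.

Theorem lemma44 (V : finType) (G : rel V) (T : dtree V) (vl vr : dtree V) :
  decomp_tree G T ->
  is_node (Node Attach vl vr) T ->
  propP vl -> propP vr ->
  hbeta vl < halpha vr ->
  hmin (Node Attach vl vr) = hmin vl + hmin vr + halpha vr - hbeta vl.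
Proof.
move=> [UT _] Hn Pl Pr hab.
have U := uniq_node Hn UT.
move: (U); rewrite /= cat_uniq => /and3P[Ul _ Ur].
have bA := hbeta_le vl; have aB := halpha_le vr.
have l1 := ts_ne vl; have r1 := ts_ne vr.
have attain (u : dtree V) (k : nat) : uniq (leaves u) -> k <= #|ts u| ->
    exists2 S, kfeasible u k S & #|S| = gamma u k.
  move=> Uu hk; apply: gamma_att; have [S0 H0] := feas_ex Uu hk.
  exact: leq_trans (gamma_le H0) (max_card _).
apply/eqP; rewrite eqn_leq; apply/andP; split.
  set c := maxn 1 (hbeta vl).
  have cA : c <= #|ts vl| by rewrite geq_max l1.
  have cAr : c <= halpha vr by rewrite geq_max (leq_ltn_trans (leq0n _) hab) ltnW.
  have cB : c <= #|ts vr| := leq_trans cAr aB.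
  have Gl : gamma vl c = hmin vl + c - hbeta vl.
    by case: (Pl c cA) => _ H _ _; apply: H; rewrite leq_maxr.
  have Gr : gamma vr c = hmin vr + halpha vr - c.
    by case: (Pr c cB) => H _ _ _; apply: H.
  have [Sl /kfeasP[sSl dl [Xl [sXl cXl pl]]] eSl] := attain vl c Ul cA.
  have [Sr /kfeasP[sSr dr [Xr [sXr cXr pr]]] eSr] := attain vr c Ur cB.
  have c0 : 0 < #|Xl| by rewrite cXl leq_maxl.
  have := attach_feas U sSl sXl pl sSr dl sXr pr dr c0 (subxx Xl) (etrans cXl (esym cXr)).
  rewrite cXl cXr subnn => /gamma_le H.
  apply: leq_trans (hmin_le (leq0n _)) _; apply: leq_trans H _.
  rewrite cardsU; apply: leq_trans (leq_subr _ _) _.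
  rewrite eSl eSr Gl Gr.
  have : hbeta vl <= c by rewrite leq_maxr.
  lia.
have [k hk ->] := hmin_att (Node Attach vl vr).
have [S HS <-] := attain _ k U hk.
have [m [c [hm hc hcm H]]] := lower U HS.
apply: leq_trans H.
have gl0 := hmin_le hm; have gr0 := hmin_le hc.
have gl1 : hbeta vl <= m -> gamma vl m = hmin vl + m - hbeta vl.
  by case: (Pl m hm) => _ H _ _.
have gr1 : c <= halpha vr -> gamma vr c = hmin vr + halpha vr - c.
  by case: (Pr c hc) => H _ _ _.
case: (leqP (hbeta vl) m) => h1; case: (leqP c (halpha vr)) => h2.
- rewrite (gl1 h1) (gr1 h2); lia.
- rewrite (gl1 h1); lia.
- rewrite (gr1 h2); lia.
- lia.
Qed.
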